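(* Let $\mathcal N$ be a phylogenetic network on $X$ that is both tree-sibling and time-consistent. Then $\mathcal N$ is an orchard network.
   Context: Throughout, $X$ is a non-empty finite set and all paths are directed. A phylogenetic network on $X$ is a rooted acyclic directed graph with no parallel arcs such that: (i) the unique root has in-degree $0$ and out-degree $2$; (ii) every vertex of out-degree $0$ has in-degree $1$, and the set of vertices of out-degree $0$ (the leaves) is $X$; (iii) every other vertex has either in-degree $1$ and out-degree $2$ (a tree vertex) or in-degree $2$ and out-degree $1$ (a reticulation). If $|X|=1$, a single vertex (the element of $X$, which is then the root) is also a phylogenetic network. Arcs directed into a reticulation are reticulation arcs; all other arcs are tree arcs. For a $2$-element subset $\{a,b\}\subseteq X$ with parents $p_a,p_b$: $\{a,b\}$ is a cherry if $p_a=p_b$; it is a reticulated cherry with reticulation leaf $b$ if $p_b$ is a reticulation and $(p_a,p_b)$ is an arc. If $\{a,b\}$ is a cherry, reducing $b$ means deleting $b$ and suppressing the resulting vertex of in-degree 1 and out-degree 1 (if the common parent is the root, delete $b$ and the root, leaving the single vertex $a$). If $\{a,b\}$ is a reticulated cherry with reticulation leaf $b$, cutting $\{a,b\}$ means deleting the arc $(p_a,p_b)$ and suppressing the two resulting vertices of in-degree 1 and out-degree 1. These two operations are called cherry reductions. A cherry-reduction sequence of $\mathcal N$ is a sequence $\mathcal N=\mathcal N_0,\mathcal N_1,\dots,\mathcal N_k$ where each $\mathcal N_i$ is obtained from $\mathcal N_{i-1}$ by a single cherry reduction; it is complete if $\mathcal N_k$ is a single vertex. $\mathcal N$ is an orchard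 network if it has a complete cherry-reduction sequence. $\mathcal N$ is tree-sibling if every reticulation has a parent that is also the parent of a tree vertex or a leaf. $\mathcal N$ is time-consistent if there is a map $t$ from the vertex set to the non-negative integers with $t(u)=t(v)$ for every reticulation arc $(u,v)$ and $t(u)<t(v)$ for every tree arc $(u,v)$. *)

(* Defs.v *)
From mathcomp Require Import all_boot.
Set Implicit Arguments. Unset Strict Implicit. Unset Printing Implicit Defensive.

(* Arcs as a set means no parallel arcs.
   Leaves keep their identity (as elements of T) under cherry reductions. *)
Record net (T : finType) := Net { verts : {set T}; arcs : {set T * T} }.

Section Net.
Variable T : finType.
Implicit Types (N : net T) (u v w a b p : T).

Definition arc N : rel T := fun u v => (u, v) \in arcs N.
Definition parents N v : {set T} := [set u | arc N u v].
Definition children N v : {set T} := [set w | arc N v w].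
Definition indeg N v := #|parents N v|.
Definition outdeg N v := #|children N v|.

Definition is_tree_vertex N v := indeg N v = 1 /\ outdeg N v = 2.
Definition is_reticulation N v := indeg N v = 2 /\ outdeg N v = 1.
Definition is_leaf N v := v \in verts N /\ outdeg N v = 0.

Definition acyclic N := forall u v, arc N u v -> ~~ connect (arc N) v u.

Definition phylo_network (X : {set T}) N :=
  X != set0 /\
  ( (#|X| = 1 /\ verts N = X /\ arcs N = set0)
  \/ ( (forall u v, arc N u v -> u \in verts N /\ v \in verts N)
     /\ acyclic N
     /\ (exists r, [/\ r \in verts N, indeg N r = 0, outdeg N r = 2 &
           forall v, v \in verts N -> indeg N v = 0 -> v = r]
          /\ (forall v, v \in verts N -> v != r -> outdeg N v != 0 ->
                is_tree_vertex N v \/ is_reticulation N v))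
     /\ (forall v, v \in verts N -> outdeg N v = 0 -> indeg N v = 1)
     /\ [set v in verts N | outdeg N v == 0] = X)).

Definition del_vertex N w : net T :=
  Net [set x in verts N | x != w] [set e in arcs N | (e.1 != w) && (e.2 != w)].

Definition del_arc N u v : net T := Net (verts N) (arcs N :\ (u, v)).

Definition suppress N w : net T :=
  Net [set x in verts N | x != w]
      ([set e in arcs N | (e.1 != w) && (e.2 != w)]
        :|: setX (parents N w) (children N w)).

Definition single_vertex N := #|verts N| = 1 /\ arcs N = set0.

Definition cherry N a b p :=
  [/\ a != b, is_leaf N a, is_leaf N b, arc N p a & arc N p b].

Definition ret_cherry N a b pa pb :=
  [/\ a != b, is_leaf N a, is_leaf N b, arc N pa a & arc N pb b]
  /\ is_reticulation N pb /\ arc N pa pb.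

Definition reduce_cherry N a b p : net T :=
  if indeg N p == 0 then Net [set a] set0
  else suppress (del_vertex N b) p.

Definition cut_ret_cherry N pa pb : net T :=
  suppress (suppress (del_arc N pa pb) pa) pb.

Definition cherry_reduction N N' :=
  (exists a b p, cherry N a b p /\ N' = reduce_cherry N a b p)
  \/ (exists a b pa pb, ret_cherry N a b pa pb /\ N' = cut_ret_cherry N pa pb).

Inductive complete_seq : net T -> Prop :=
  | cs_done N : single_vertex N -> complete_seq N
  | cs_step N N' : cherry_reduction N N' -> complete_seq N' -> complete_seq N.

Definition orchard N := complete_seq N.

Definition tree_sibling N :=
  forall v, v \in verts N -> is_reticulation N v ->
    exists u, arc N u v /\
      exists w, arc N u w /\ (is_tree_vertex N w \/ is_leaf N w).

Definition time_consistent N :=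
  exists t : T -> nat, forall u v, arc N u v ->
    (is_reticulation N v -> t u = t v) /\ (~ is_reticulation N v -> t u < t v).

End Net.

(* Main.v *)
Require Import Defs.
From mathcomp Require Import all_boot.
Import Defs.
Set Implicit Arguments. Unset Strict Implicit. Unset Printing Implicit Defensive.

Lemma arc_sup (T : finType) (N : net T) w u v :
  arc (suppress N w) u v = ((u != w) && (v != w) && arc N u v) || (arc N u w && arc N w v).
Proof. rewrite /arc /= in_setU in_setX !inE /arc /=. by case: ((u, v) \in arcs N); rewrite ?andbT ?andbF. Qed.

Lemma arc_delv (T : finType) (N : net T) b u v :
  arc (del_vertex N b) u v = [&& u != b, v != b & arc N u v].
Proof. rewrite /arc /= !inE /=. by case: ((u, v) \in arcs N); rewrite ?andbT ?andbF. Qed.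

Lemma arc_dela (T : finType) (N : net T) a b u v :
  arc (del_arc N a b) u v = ((u, v) != (a, b)) && arc N u v.
Proof. by rewrite /arc /= !inE. Qed.

Lemma verts_sup (T : finType) (N : net T) w : verts (suppress N w) = verts N :\ w.
Proof. by apply/setP=> x; rewrite !inE andbC. Qed.
Lemma verts_delv (T : finType) (N : net T) w : verts (del_vertex N w) = verts N :\ w.
Proof. by apply/setP=> x; rewrite !inE andbC. Qed.

Lemma sup_deg (T : finType) (N : net T) w q c x :
  parents N w = [set q] -> children N w = [set c] -> ~~ arc N q c -> ~~ arc N w w ->
  x != w -> indeg (suppress N w) x = indeg N x /\ outdeg (suppress N w) x = outdeg N x.
Proof.
move=> Hp Hc Hqc Hww xw.
have Ep u : arc N u w = (u == q) by rewrite -in_set1 -Hp inE.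
have Ec v : arc N w v = (v == c) by rewrite -in_set1 -Hc inE.
have qw : q != w by move: Hww; rewrite Ep eq_sym.
have cw : c != w by move: Hww; rewrite Ec eq_sym.
split.
- rewrite /indeg; case: (eqVneq x c) => [->|xc].
  + have -> : parents (suppress N w) c = q |: (parents N c :\ w).
      apply/setP=> u; rewrite !inE arc_sup Ep Ec eqxx cw andbT /=.
      by case: (u == q); rewrite ?orbT ?orbF.
    rewrite cardsU1 !inE negb_and Hqc orbT /= [in RHS](cardsD1 w) inE Ec eqxx.
    by rewrite add1n.
  + suff -> : parents (suppress N w) x = parents N x by [].
    apply/setP=> u; rewrite !inE arc_sup Ec (negbTE xc) andbF orbF xw andbT.
    by case: (eqVneq u w) => [->|]; rewrite ?Ec ?(negbTE xc).
- rewrite /outdeg; case: (eqVneq x q) => [->|xq].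
  + have -> : children (suppress N w) q = c |: (children N q :\ w).
      apply/setP=> v; rewrite !inE arc_sup Ep Ec eqxx qw /=.
      by case: (v == c); rewrite ?orbT ?orbF.
    rewrite cardsU1 !inE negb_and Hqc orbT /= [in RHS](cardsD1 w) inE Ep eqxx.
    by rewrite add1n.
  + suff -> : children (suppress N w) x = children N x by [].
    apply/setP=> v; rewrite !inE arc_sup Ep (negbTE xq) /= orbF xw /=.
    by case: (eqVneq v w) => [->|]; rewrite ?Ep ?(negbTE xq) ?andbF.
Qed.


Record InvW (T : finType) (N : net T) (r : T) (rk t : T -> nat) : Prop := {
  i_arcs : forall u v, arc N u v -> u \in verts N /\ v \in verts N;
  i_rk : forall u v, arc N u v -> rk u < rk v;
  i_rv : r \in verts N; i_r0 : indeg N r = 0; i_r2 : outdeg N r = 2;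
  i_runiq : forall v, v \in verts N -> indeg N v = 0 -> v = r;
  i_int : forall v, v \in verts N -> v != r -> outdeg N v != 0 ->
            is_tree_vertex N v \/ is_reticulation N v;
  i_leaf : forall v, v \in verts N -> outdeg N v = 0 -> indeg N v = 1;
  i_ts : tree_sibling N;
  i_tc : forall u v, arc N u v ->
    (is_reticulation N v -> t u = t v) /\ (~ is_reticulation N v -> t u < t v) }.

Lemma InvW_transfer (T : finType) (N N' : net T) r rk t :
  InvW N r rk t -> verts N' \subset verts N ->
  (forall x, x \in verts N' -> indeg N' x = indeg N x /\ outdeg N' x = outdeg N x) ->
  (forall u v, arc N' u v -> [/\ u \in verts N', v \in verts N', rk u < rk v &
      (is_reticulation N v -> t u = t v) /\ (~ is_reticulation N v -> t u < t v)]) ->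
  r \in verts N' -> tree_sibling N' -> InvW N' r rk t.
Proof.
move=> I sub deg arcs rv ts.
have retE x : x \in verts N' -> is_reticulation N' x <-> is_reticulation N x.
  by move=> /deg [Hi Ho]; rewrite /is_reticulation Hi Ho.
have treeE x : x \in verts N' -> is_tree_vertex N' x <-> is_tree_vertex N x.
  by move=> /deg [Hi Ho]; rewrite /is_tree_vertex Hi Ho.
split => //.
- by move=> u v /arcs [].
- by move=> u v /arcs [].
- by have [-> _] := deg r rv; exact: (i_r0 I).
- by have [_ ->] := deg r rv; exact: (i_r2 I).
- move=> v vV; have [-> _] := deg v vV; apply: (i_runiq I); exact: (subsetP sub).
- move=> v vV vr; have [_ ->] := deg v vV => od.
  by case: (i_int I (subsetP sub _ vV) vr od) => H; [left; apply/treeE | right; apply/retE].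
- move=> v vV; have [-> ->] := deg v vV; apply: (i_leaf I); exact: (subsetP sub).
- move=> u v /arcs [_ vV _ [H1 H2]]; split => [/(retE v vV) | R]; first exact: H1.
  by apply: H2 => R'; apply: R; apply/(retE v vV).
Qed.


Lemma nochild (T : finType) (N : net T) v y : outdeg N v = 0 -> arc N v y = false.
Proof. move=> /eqP; rewrite cards_eq0 => /eqP E; apply/negbTE. by move: (in_set0 y); rewrite -E inE => ->. Qed.

Lemma noloop (T : finType) (N : net T) r rk t x : InvW N r rk t -> arc N x x = false.
Proof. move=> I; apply/negbTE/negP => /(i_rk I); by rewrite ltnn. Qed.

Lemma leaf_parent (T : finType) (N : net T) r rk t v p : InvW N r rk t ->
  outdeg N v = 0 -> arc N p v -> forall x, arc N x v = (x == p).
Proof.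
move=> I o pv; have vV := (i_arcs I pv).2.
have /eqP /cards1P [y Ey] := i_leaf I vV o.
have : p \in parents N v by rewrite inE.
rewrite /parents in Ey *; rewrite Ey inE => /eqP -> x.
by rewrite -in_set1 -Ey inE.
Qed.

Lemma setE1 (T : finType) (A : {set T}) x : A = [set x] -> forall y, (y \in A) = (y == x).
Proof. by move=> -> y; rewrite inE. Qed.

Lemma cherry_case (T : finType) (N : net T) r rk t a b s q :
  InvW N r rk t -> children N s = [set a; b] -> a != b -> outdeg N a = 0 ->
  outdeg N b = 0 -> parents N s = [set q] ->
  InvW (suppress (del_vertex N b) s) r rk t /\
  #|verts (suppress (del_vertex N b) s)| < #|verts N|.
Proof.
move=> I Hc ab oa ob Hp.
have Esc y : arc N s y = (y == a) || (y == b) by rewrite -in_set2 -Hc inE.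
have Eqs x : arc N x s = (x == q) by rewrite -in_set1 -Hp inE.
have sa : arc N s a by rewrite Esc eqxx.
have sb : arc N s b by rewrite Esc eqxx orbT.
have qs : arc N q s by rewrite Eqs.
have Ea := leaf_parent I oa sa; have Eb := leaf_parent I ob sb.
have aV := (i_arcs I sa).2; have bV := (i_arcs I sb).2; have sV := (i_arcs I sa).1.
have qV := (i_arcs I qs).1.
have rksa := i_rk I sa; have rksb := i_rk I sb; have rkqs := i_rk I qs.
have sb' : s != b by apply: contraTneq rksb => ->; rewrite ltnn.
have sa' : s != a by apply: contraTneq rksa => ->; rewrite ltnn.
have qs' : q != s by apply: contraTneq rkqs => ->; rewrite ltnn.
have qb' : q != b by apply: contraTneq qs => ->; rewrite nochild.
have qa' : q != a by apply: contraTneq qs => ->; rewrite nochild.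
set N1 := del_vertex N b.
have E1ps u : arc N1 u s = (u == q).
  rewrite arc_delv Eqs sb' /=; case: (eqVneq u q) => [->|]; by rewrite ?qb' ?andbF.
have E1sc v : arc N1 s v = (v == a).
  rewrite arc_delv Esc sb' /=; case: (eqVneq v a) => [->|va] /=; first by rewrite ab.
  by case: (eqVneq v b).
have P1 : parents N1 s = [set q] by apply/setP=> u; rewrite !inE E1ps.
have C1 : children N1 s = [set a] by apply/setP=> u; rewrite !inE E1sc.
have nqa : ~~ arc N1 q a by rewrite arc_delv Ea (negbTE qs') !andbF.
have nss : ~~ arc N1 s s by rewrite E1sc.
set N' := suppress N1 s.
have VE : verts N' = verts N :\ b :\ s by rewrite verts_sup verts_delv.
have EA u v : arc N' u v = [&& u != s, v != s, u != b, v != b & arc N u v] || ((u == q) && (v == a)).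
  by rewrite arc_sup E1ps E1sc arc_delv !andbA.
have deg x : x \in verts N' -> indeg N' x = indeg N x /\ outdeg N' x = outdeg N x.
  rewrite VE !inE => /and3P [xs xb _].
  have [-> ->] := sup_deg P1 C1 nqa nss xs.
  rewrite /indeg /outdeg; split.
    suff -> : parents N1 x = parents N x by [].
    apply/setP=> y; rewrite !inE arc_delv xb /=.
    by case: (eqVneq y b) => [->|] //=; rewrite nochild.
  suff -> : children N1 x = children N x by [].
  apply/setP=> y; rewrite !inE arc_delv xb /=.
  by case: (eqVneq y b) => [->|] //=; rewrite Eb (negbTE xs).
have vN' x : x \in verts N' = [&& x != s, x != b & x \in verts N] by rewrite VE !inE.
have notret_leaf x : outdeg N x = 0 -> ~ is_reticulation N x by move=> o [_]; rewrite o.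
have s_nret : ~ is_reticulation N s.
  by case=> _; rewrite /outdeg Hc cards2 ab.
split.
- apply: (InvW_transfer I).
  + by rewrite VE; apply/subsetP=> x; rewrite !inE => /and3P [].
  + exact: deg.
  + move=> u v; rewrite EA => /orP [/and5P [us vs ub vb uv] | /andP [/eqP -> /eqP ->]].
    * have [uV vV] := i_arcs I uv.
      by split; rewrite ?vN' ?us ?vs ?ub ?vb ?uV ?vV //; [exact: i_rk I _ _ uv | exact: i_tc I _ _ uv].
    * split.
      - by rewrite vN' qs' qb' qV.
      - by rewrite vN' (eq_sym a s) sa' ab aV.
      - exact: ltn_trans rkqs rksa.
      - split=> [/notret_leaf //|_].
        have [_ /(_ s_nret) h1] := i_tc I qs; have [_ /(_ (notret_leaf _ oa)) h2] := i_tc I sa.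
        exact: ltn_trans h1 h2.
  + have ir := i_r0 I; have or := i_r2 I.
    rewrite vN' (i_rv I) andbT; apply/andP; split.
      by apply/eqP => E; move: ir; rewrite E /indeg Hp cards1.
    by apply/eqP => E; move: or; rewrite E ob.
  + move=> v; rewrite vN' => /and3P [vs vb vV] R.
    have vV' : v \in verts N' by rewrite vN' vs vb vV.
    have [Hi Ho] := deg v vV'.
    have R' : is_reticulation N v by move: R; rewrite /is_reticulation Hi Ho.
    have [u0 [u0v [w0 [u0w0 Hw0]]]] := i_ts I vV R'.
    have u0s : u0 != s.
      apply: contraTneq u0v => ->; rewrite Esc; apply/negP => /orP [] /eqP E; move: R'; rewrite E.
        by case=> _; rewrite oa.
      by case=> _; rewrite ob.
    have u0b : u0 != b by apply: contraTneq u0v => ->; rewrite nochild.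
    exists u0; split; first by rewrite EA u0s vs u0b vb u0v.
    case: (eqVneq w0 s) => [Ew|w0s].
      move: u0w0; rewrite Ew Eqs => /eqP Eu.
      exists a; split; first by rewrite EA Eu !eqxx /= orbT.
      have aV' : a \in verts N' by rewrite vN' (eq_sym a s) sa' ab aV.
      right; split; first by [].
      by have [_ ->] := deg a aV'.
    have w0b : w0 != b by apply: contraTneq u0w0 => ->; rewrite Eb.
    have w0V := (i_arcs I u0w0).2.
    have w0V' : w0 \in verts N' by rewrite vN' w0s w0b w0V.
    exists w0; split; first by rewrite EA u0s w0s u0b w0b u0w0.
    have [Hi' Ho'] := deg w0 w0V'.
    case: Hw0 => [[h1 h2]|[_ h2]]; [left | right]; rewrite /is_tree_vertex /is_leaf ?Hi' Ho' //.
- apply: proper_card; apply/properP; split.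
    by rewrite VE; apply/subsetP=> x; rewrite !inE => /and3P [].
  by exists b => //; rewrite vN' eqxx andbF.
Qed.


Lemma sub2_eq (T : finType) (A : {set T}) x y : x != y -> x \in A -> y \in A -> #|A| = 2 ->
  A = [set x; y].
Proof.
move=> xy xA yA cA; apply/eqP; rewrite eq_sym eqEcard cA cards2 xy leqnn andbT.
by apply/subsetP=> z; rewrite !inE => /orP [] /eqP ->.
Qed.

Lemma sub1_eq (T : finType) (A : {set T}) x : x \in A -> #|A| = 1 -> A = [set x].
Proof.
move=> xA cA; apply/eqP; rewrite eq_sym eqEcard cA cards1 leqnn andbT.
by apply/subsetP=> z; rewrite !inE => /eqP ->.
Qed.

Lemma cut_case (T : finType) (N : net T) r rk t w b u s :
  InvW N r rk t -> arc N u w -> arc N u s -> arc N s b -> is_reticulation N s ->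
  outdeg N w = 0 -> outdeg N b = 0 ->
  InvW (cut_ret_cherry N u s) r rk t /\ #|verts (cut_ret_cherry N u s)| < #|verts N|.
Proof.
move=> I uw us sb [is2 os1] ow ob.
have [uV wV] := i_arcs I uw; have sV := (i_arcs I us).2; have bV := (i_arcs I sb).2.
have rkuw := i_rk I uw; have rkus := i_rk I us; have rksb := i_rk I sb.
have ws : w != s by apply/eqP => E; move: ow; rewrite E os1.
have Cs : children N s = [set b] by apply: sub1_eq; rewrite ?inE.
have Esc y : arc N s y = (y == b) by rewrite -in_set1 -Cs inE.
have [h [hu Ps]] : exists h, h != u /\ parents N s = [set u; h].
  move: is2 => /eqP /cards2P [x [y [xy E]]].
  have : u \in parents N s by rewrite inE.
  rewrite E !inE => /orP [] /eqP Eu.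
    by subst x; exists y; rewrite eq_sym.
  by subst y; exists x; split => //; rewrite setUC.
have Eps x : arc N x s = (x == u) || (x == h) by rewrite -in_set2 -Ps inE.
have hs : arc N h s by rewrite Eps eqxx orbT.
have hV := (i_arcs I hs).1; have rkhs := i_rk I hs.
have ou2 : outdeg N u = 2.
  case: (eqVneq u r) => [->|ur]; first exact: (i_r2 I).
  have o0 : outdeg N u != 0.
    apply/eqP => /eqP; rewrite cards_eq0 => /eqP E.
    have : s \in children N u by rewrite inE.
    by rewrite E inE.
  have ge2 : 2 <= outdeg N u.
    have : #|[set s; w]| <= outdeg N u.
      by apply: subset_leq_card; apply/subsetP=> z; rewrite !inE => /orP [] /eqP ->.
    by rewrite cards2 (eq_sym s w) ws.
  by case: (i_int I uV ur o0) => [[_ ->] | [_ E]] //; rewrite E in ge2.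
have Cu : children N u = [set s; w] by apply: sub2_eq; rewrite ?inE // eq_sym.
have Euc y : arc N u y = (y == s) || (y == w) by rewrite -in_set2 -Cu inE.
have ur : u != r.
  apply/eqP => Eur.
  have claim : forall n x, rk x < n -> x \in verts N -> [\/ x = r, x = w | rk s <= rk x].
    elim=> [//|n IH] x xn xV.
    case: (eqVneq x r) => [->|xr]; first by constructor 1.
    have : indeg N x != 0 by apply/eqP => /(i_runiq I xV) E; rewrite E eqxx in xr.
    rewrite /indeg -lt0n => /card_gt0P [y]; rewrite inE => yx.
    have yV := (i_arcs I yx).1; have rkyx := i_rk I yx.
    case: (IH y (leq_trans rkyx xn) yV) => [Ey|Ey|le].
    - move: yx; rewrite Ey -Eur Euc => /orP [] /eqP ->; [constructor 3 | constructor 2] => //.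
    - by move: yx; rewrite Ey nochild.
    - by constructor 3; apply: ltnW (leq_ltn_trans le rkyx).
  case: (claim (rk h).+1 h (ltnSn _) hV) => [E|E|le].
  - by move: hu; rewrite E Eur eqxx.
  - by move: hs; rewrite E nochild.
  - by move: (leq_ltn_trans le rkhs); rewrite ltnn.
have iu1 : indeg N u = 1.
  have o0 : outdeg N u != 0 by rewrite ou2.
  by case: (i_int I uV ur o0) => [[->]|[_ E]] //; rewrite E in ou2.
have [g Pu] : exists g, parents N u = [set g] by apply/cards1P/eqP.
have Egu x : arc N x u = (x == g) by rewrite -in_set1 -Pu inE.
have gu : arc N g u by rewrite Egu.
have gV := (i_arcs I gu).1; have rkgu := i_rk I gu.
have Ew := leaf_parent I ow uw; have Eb := leaf_parent I ob sb.
have neq_rk x y : rk x < rk y -> x != y by move=> H; apply/eqP => E; rewrite E ltnn in H.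
have gu' := neq_rk _ _ rkgu; have us' := neq_rk _ _ rkus; have hs' := neq_rk _ _ rkhs.
have gs' := neq_rk _ _ (ltn_trans rkgu rkus).
have bs' : b != s by rewrite eq_sym; apply: neq_rk.
have bu' : b != u by rewrite eq_sym; apply: neq_rk; exact: ltn_trans rkus rksb.
have wu' : w != u by rewrite eq_sym; apply: neq_rk.
have bw' : b != w by apply/eqP => E; move: uw; rewrite -E Eb (negbTE us').
set N1 := del_arc N u s.
have E1xu x : arc N1 x u = (x == g).
  by rewrite arc_dela xpair_eqE (negbTE us') andbF Egu.
have E1uy y : arc N1 u y = (y == w).
  rewrite arc_dela xpair_eqE eqxx Euc /=; case: (eqVneq y s) => [->|] //=.
  by rewrite eq_sym (negbTE ws).
have P1 : parents N1 u = [set g] by apply/setP=> x; rewrite !inE E1xu.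
have C1 : children N1 u = [set w] by apply/setP=> x; rewrite !inE E1uy.
have n1gw : ~~ arc N1 g w by rewrite arc_dela Ew (negbTE gu') andbF.
have n1uu : ~~ arc N1 u u by rewrite E1uy eq_sym.
set N2 := suppress N1 u.
have E2 x y : arc N2 x y = [&& x != u, y != u & arc N x y] || (x == g) && (y == w).
  rewrite arc_sup E1xu E1uy arc_dela; case: (eqVneq x u) => [->|xu] //=.
  by rewrite xpair_eqE (negbTE xu).
have E2xs x : arc N2 x s = (x == h).
  rewrite E2 Eps (eq_sym s w) (negbTE ws) andbF orbF (eq_sym s u) (negbTE us') /=.
  by case: (eqVneq x u) => [->|] //=; rewrite eq_sym (negbTE hu).
have E2sy y : arc N2 s y = (y == b).
  rewrite E2 Esc (eq_sym s g) (negbTE gs') /= orbF (eq_sym s u) (negbTE us') /=.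
  by case: (eqVneq y b) => [->|] /=; rewrite ?bu' ?andbF.
have P2 : parents N2 s = [set h] by apply/setP=> x; rewrite !inE E2xs.
have C2 : children N2 s = [set b] by apply/setP=> x; rewrite !inE E2sy.
have n2hb : ~~ arc N2 h b.
  rewrite E2 Eb (negbTE hs') (negbTE bw') !andbF.
  done.
have n2ss : ~~ arc N2 s s by rewrite E2sy eq_sym.
have -> : cut_ret_cherry N u s = suppress N2 s by [].
set N3 := suppress N2 s.
have VE : verts N3 = verts N :\ u :\ s by rewrite !verts_sup.
have vN' x : x \in verts N3 = [&& x != s, x != u & x \in verts N] by rewrite VE !inE.
have EA x y : arc N3 x y = [&& x != s, y != s, x != u, y != u & arc N x y]
     || (x == g) && (y == w) || (x == h) && (y == b).
  rewrite arc_sup E2xs E2sy E2.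
  case: (eqVneq x g) => [->|xg]; case: (eqVneq y w) => [->|yw];
    rewrite ?gs' ?ws /= ?orbT ?andbF ?orbF ?andbT //; by rewrite !andbA.
have deg x : x \in verts N3 -> indeg N3 x = indeg N x /\ outdeg N3 x = outdeg N x.
  rewrite vN' => /and3P [xs xu _].
  have [-> ->] := sup_deg P2 C2 n2hb n2ss xs.
  have [-> ->] := sup_deg P1 C1 n1gw n1uu xu.
  rewrite /indeg /outdeg; split.
    suff -> : parents N1 x = parents N x by [].
    by apply/setP=> y; rewrite !inE arc_dela xpair_eqE (negbTE xs) andbF.
  suff -> : children N1 x = children N x by [].
  by apply/setP=> y; rewrite !inE arc_dela xpair_eqE (negbTE xu).
have notret_leaf x : outdeg N x = 0 -> ~ is_reticulation N x by move=> o [_]; rewrite o.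
have u_nret : ~ is_reticulation N u by case=> _; rewrite ou2.
have wV' : w \in verts N3 by rewrite vN' ws wu' wV.
split.
- apply: (InvW_transfer I).
  + by rewrite VE; apply/subsetP=> x; rewrite !inE => /and3P [].
  + exact: deg.
  + move=> x y; rewrite EA => /orP [/orP [/and5P [xs ys xu yu xy] | /andP [/eqP -> /eqP ->]] | /andP [/eqP -> /eqP ->]].
    * have [xV yV] := i_arcs I xy.
      split; rewrite ?vN' ?xs ?ys ?xu ?yu ?xV ?yV //; [exact: i_rk I _ _ xy | exact: i_tc I _ _ xy].
    * split => //.
      - by rewrite vN' gs' gu' gV.
      - exact: ltn_trans rkgu rkuw.
      - split=> [/notret_leaf //|_].
        have [_ /(_ u_nret) h1] := i_tc I gu; have [_ /(_ (notret_leaf _ ow)) h2] := i_tc I uw.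
        exact: ltn_trans h1 h2.
    * split.
      - by rewrite vN' hs' hu hV.
      - by rewrite vN' bs' bu' bV.
      - exact: ltn_trans rkhs rksb.
      - split=> [/notret_leaf //|_].
        have [/(_ (conj is2 os1)) h1 _] := i_tc I hs; have [_ /(_ (notret_leaf _ ob)) h2] := i_tc I sb.
        by rewrite h1.
  + rewrite vN' (i_rv I) andbT (eq_sym r u) ur andbT.
    by apply/eqP => E; move: (i_r0 I); rewrite E is2.
  + move=> v; rewrite vN' => /and3P [vs vu vV] R.
    have vV' : v \in verts N3 by rewrite vN' vs vu vV.
    have [Hi Ho] := deg v vV'.
    have R' : is_reticulation N v by move: R; rewrite /is_reticulation Hi Ho.
    have [u0 [u0v [w0 [u0w0 Hw0]]]] := i_ts I vV R'.
    have u0u : u0 != u.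
      apply: contraTneq u0v => ->; rewrite Euc (negbTE vs) /=; apply/eqP => E.
      by move: R'; rewrite E; case=> _; rewrite ow.
    have u0s : u0 != s.
      apply: contraTneq u0v => ->; rewrite Esc; apply/eqP => E.
      by move: R'; rewrite E; case=> _; rewrite ob.
    exists u0; split; first by rewrite EA u0s vs u0u vu u0v.
    case: (eqVneq w0 u) => [Ew0|w0u].
      move: u0w0; rewrite Ew0 Egu => /eqP Eu.
      exists w; split; first by rewrite EA Eu !eqxx /= orbT.
      right; split; first by [].
      by have [_ ->] := deg w wV'.
    have w0s : w0 != s.
      apply/eqP => E; rewrite E in Hw0.
      by case: Hw0 => [[h1 _]|[_ h2]]; [rewrite is2 in h1 | rewrite os1 in h2].
    have w0V := (i_arcs I u0w0).2.
    have w0V' : w0 \in verts N3 by rewrite vN' w0s w0u w0V.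
    exists w0; split; first by rewrite EA u0s w0s u0u w0u u0w0.
    have [Hi' Ho'] := deg w0 w0V'.
    case: Hw0 => [[h1 h2]|[_ h2]]; [left | right]; rewrite /is_tree_vertex /is_leaf ?Hi' Ho' //.
- apply: proper_card; apply/properP; split.
    by rewrite VE; apply/subsetP=> x; rewrite !inE => /and3P [].
  by exists u => //; rewrite vN' eqxx andbF.
Qed.


Lemma retP (T : finType) (N : net T) v :
  reflect (is_reticulation N v) ((indeg N v == 2) && (outdeg N v == 1)).
Proof. by apply: (iffP andP) => [[/eqP ? /eqP ?]|[-> ->]]. Qed.

Lemma step (T : finType) (N : net T) r rk t : InvW N r rk t ->
  exists N', cherry_reduction N N' /\ (single_vertex N' \/
    ((exists r' rk' t', InvW N' r' rk' t') /\ #|verts N'| < #|verts N|)).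
Proof.
move=> I.
set S0 := [set v in verts N | outdeg N v != 0].
have rS0 : r \in S0 by rewrite inE (i_rv I) (i_r2 I).
have [s1 s1S0 s1max] := @arg_maxnP _ r (fun v => v \in S0) t rS0.
set S := [set v in S0 | t v == t s1].
have s1S : s1 \in S by rewrite inE s1S0 eqxx.
have [s sS smax] := @arg_maxnP _ s1 (fun v => v \in S) rk s1S.
move: (sS); rewrite !inE => /andP [/andP [sV os0] /eqP ts].
have childleaf c : arc N s c -> outdeg N c = 0.
  move=> sc; apply/eqP; apply: contraT => oc.
  have cV := (i_arcs I sc).2.
  have cS0 : c \in S0 by rewrite inE cV oc.
  have tc1 := s1max c cS0.
  have [Ht1 Ht2] := i_tc I sc; have rksc := i_rk I sc.
  case: (retP N c) => [R|nR].
    have cS : c \in S by rewrite inE cS0 -(Ht1 R) ts eqxx.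
    by move: (leq_trans rksc (smax c cS)); rewrite ltnn.
  by move: (leq_trans (Ht2 nR) tc1); rewrite ts ltnn.
case: (retP N s) => [Rs|nRs].
-
  have [_ os1] := Rs.
  have [b Cs] : exists b, children N s = [set b] by apply/cards1P; rewrite -/(outdeg N s) os1.
  have : b \in children N s by rewrite Cs inE.
  rewrite inE => sb.
  have ob := childleaf b sb.
  have [u [us [w [uw Hw]]]] := i_ts I sV Rs.
  have nRw : ~ is_reticulation N w.
    by case: Hw => [[h1 _]|[_ h2]] [h3 h4]; [rewrite h1 in h3 | rewrite h2 in h4].
  have [tus _] := i_tc I us; have [_ /(_ nRw) tuw] := i_tc I uw.
  have ow : outdeg N w = 0.
    apply/eqP; apply: contraT => oc.
    have wS0 : w \in S0 by rewrite inE (i_arcs I uw).2 oc.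
    by move: (leq_trans tuw (s1max w wS0)); rewrite -ts -(tus Rs) ltnn.
  have wb : w != b.
    apply/eqP => E; move: uw; rewrite E (leaf_parent I ob sb) => /eqP E'.
    by move: us; rewrite E' (noloop s I).
  exists (cut_ret_cherry N u s); split.
    right; exists w, b, u, s; split => //; split; last by [].
    split => //; split => //; [exact: (i_arcs I uw).2 | exact: (i_arcs I sb).2].
  have [I' sz] := cut_case I uw us sb Rs ow ob.
  by right; split => //; exists r, rk, t.
-
  have os2 : outdeg N s = 2.
    case: (eqVneq s r) => [->|sr]; first exact: (i_r2 I).
    by case: (i_int I sV sr os0) => [[_ ->]|].
  have [a [b [ab Cs]]] : exists a b, a != b /\ children N s = [set a; b] by apply/cards2P/eqP.
  have : a \in children N s by rewrite Cs !inE eqxx.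
  rewrite inE => sa.
  have : b \in children N s by rewrite Cs !inE eqxx orbT.
  rewrite inE => sb.
  have oa := childleaf a sa; have ob := childleaf b sb.
  exists (reduce_cherry N a b s); split.
    left; exists a, b, s; split => //; split => //.
      by split => //; exact: (i_arcs I sa).2.
    by split => //; exact: (i_arcs I sb).2.
  rewrite /reduce_cherry; case: ifP => [_|is0].
    by left; split => //=; rewrite cards1.
  have sr : s != r by apply/eqP => E; move: is0; rewrite E (i_r0 I).
  have is1 : indeg N s = 1 by case: (i_int I sV sr os0) => [[->]|].
  have [q Ps] : exists q, parents N s = [set q] by apply/cards1P/eqP.
  have [I' sz] := cherry_case I Cs ab oa ob Ps.
  by right; split => //; exists r, rk, t.
Qed.

Lemma main_ind (T : finType) n : forall (N : net T), #|verts N| <= n ->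
  (exists r rk t, InvW N r rk t) -> orchard N.
Proof.
elim: n => [|n IH] N sz [r [rk [t I]]].
  by move: sz; rewrite leqn0 cards_eq0 => /eqP E; move: (i_rv I); rewrite E inE.
have [N' [red [sv | [I' sz']]]] := step I.
  by apply: (cs_step red); apply: cs_done.
by apply: (cs_step red); apply: IH => //; rewrite -ltnS; exact: leq_trans sz' sz.
Qed.

Theorem lemma2p1 (T : finType) (X : {set T}) (N : net T) :
  phylo_network X N -> tree_sibling N -> time_consistent N -> orchard N.
Proof.
move=> [_ [[c1 [vX aE]] | [arcsV [acyc [[r [[rV r0 r2 runiq] int]] [leafc _]]]]]] ts [t tc].
  by apply: cs_done; split => //; rewrite vX.
apply: (@main_ind _ #|verts N|) => //.
exists r, (fun x => #|[set y | connect (arc N) y x]|), t; split => //.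
move=> u v uv; apply: proper_card; apply/properP; split.
  apply/subsetP=> y; rewrite !inE => yu; apply: connect_trans yu (connect1 uv).
exists v; first by rewrite inE connect0.
by rewrite inE; exact: acyc uv.
Qed.
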